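(* Let $n\ge4$ be an even integer. For $1\le r\le n-1$ let $U^r_n=\{(k,a,b)\in(\mathbb{R}\setminus(B_n\cup C_n))\times\mathbb{R}\times\mathbb{R}: k\neq0,\ \mathrm{rank}(B^{(k,a,b)}_n)\le r,\ 4a^3+27b^2=0\}\setminus\{(k,0,0):k\in\mathbb{R}\}$. Then (a) $U^{n-1}_n=\{(k,a^{(n)}_{k,2},b^{(n)}_{k,2}): k\in\mathbb{R}\setminus(B_n\cup C_n)\}\cup\{(k,a^{(n)}_{k,3},b^{(n)}_{k,3}): k\in\mathbb{R}\setminus(B_n\cup C_n)\}$; (b) the matrix $B^{(k,a,b)}_n$ has rank exactly $n-1$ for all but finitely many triples $(k,a,b)\in U^{n-1}_n$; (c) for each $1\le r\le n-2$, the matrix $B^{(k,a,b)}_n$ has rank $r$ for only finitely many triples $(k,a,b)\in U^{n-1}_n$.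
   Context: For real $k,a,b$, the generalized $k$-FL sequence is $S^{(a,b)}_{k,0}=2b$, $S^{(a,b)}_{k,1}=bk+a$, $S^{(a,b)}_{k,m}=kS^{(a,b)}_{k,m-1}+S^{(a,b)}_{k,m-2}$. $B^{(k,a,b)}_n$ is the $n\times n$ circulant matrix whose $(i,j)$ entry is $S^{(a,b)}_{k,j-i+1}$ if $j\ge i$ and $S^{(a,b)}_{k,n+j-i+1}$ if $j<i$. Define $f_m,g_m\in\mathbb{Z}[T]$ by $f_0=0,f_1=1,g_0=2,g_1=T$, $f_m=Tf_{m-1}+f_{m-2}$, $g_m=Tg_{m-1}+g_{m-2}$; $F_n=f_{n+1}-f_n$, $G_n=g_{n+1}-g_n$, $P_n=f_{n+1}+f_n$, $Q_n=g_{n+1}+g_n$. $B_n=\{k: F_n(k)-1=0\text{ or }G_n(k)-k+2=0\}$, $C_n=\{k: P_n(k)-1=0\text{ or }Q_n(k)-k-2=0\}$. Type 2 pair: $a^{(n)}_{k,2}=-\frac{27(F_n(k)-1)^2}{4(G_n(k)-k+2)^2}$, $b^{(n)}_{k,2}=\frac{27(F_n(k)-1)^3}{4(G_n(k)-k+2)^3}$; Type 3 pair: $a^{(n)}_{k,3}=-\frac{27(P_n(k)-1)^2}{4(Q_n(k)-k-2)^2}$, $b^{(n)}_{k,3}=\frac{27(P_n(k)-1)^3}{4(Q_n(k)-k-2)^3}$. The condition $4a^3+27b^2=0$ means the curve $y^2=x^3+ax+b$ is singular. *)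

(* Defs.v *)
From HB Require Import structures.
From mathcomp Require Import all_boot all_order all_algebra.
From mathcomp Require Import reals.
Set Implicit Arguments. Unset Strict Implicit. Unset Printing Implicit Defensive.
Import Order.TTheory GRing.Theory Num.Theory.
Local Open Scope ring_scope.

Section FL.
Variable R : realType.

Fixpoint FLpair (k a b : R) (m : nat) : R * R :=
  match m with
  | 0 => (2 * b, b * k + a)
  | m'.+1 => let: (x, y) := FLpair k a b m' in (y, k * y + x)
  end.

Definition FLseq (k a b : R) (m : nat) : R := (FLpair k a b m).1.

(* the n x n circulant matrix B_n^{(k,a,b)} (0-based indices) *)
Definition Bmat (n : nat) (k a b : R) : 'M[R]_n :=
  \matrix_(i < n, j < n)
    (if (i <= j)%N then FLseq k a b (j - i + 1)%N
     else FLseq k a b (n + j - i + 1)%N).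

End FL.

Fixpoint recpair (p0 p1 : {poly int}) (m : nat) : {poly int} * {poly int} :=
  match m with
  | 0 => (p0, p1)
  | m'.+1 => let: (x, y) := recpair p0 p1 m' in (y, 'X * y + x)
  end.

Definition fpol (m : nat) : {poly int} := (recpair 0 1 m).1.
Definition gpol (m : nat) : {poly int} := (recpair 2%:P 'X m).1.

Definition Fpol (n : nat) : {poly int} := fpol n.+1 - fpol n.
Definition Gpol (n : nat) : {poly int} := gpol n.+1 - gpol n.
Definition Ppol (n : nat) : {poly int} := fpol n.+1 + fpol n.
Definition Qpol (n : nat) : {poly int} := gpol n.+1 + gpol n.

Definition peval (R : realType) (p : {poly int}) (k : R) : R :=
  (map_poly (fun z : int => z%:~R) p).[k].

Section Sets.
Variable R : realType.

Definition inB (n : nat) (k : R) : Prop :=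
  peval (Fpol n) k - 1 = 0 \/ peval (Gpol n) k - k + 2 = 0.
Definition inC (n : nat) (k : R) : Prop :=
  peval (Ppol n) k - 1 = 0 \/ peval (Qpol n) k - k - 2 = 0.

Definition a2 (n : nat) (k : R) : R :=
  - (27 * (peval (Fpol n) k - 1) ^+ 2) / (4 * (peval (Gpol n) k - k + 2) ^+ 2).
Definition b2 (n : nat) (k : R) : R :=
  (27 * (peval (Fpol n) k - 1) ^+ 3) / (4 * (peval (Gpol n) k - k + 2) ^+ 3).
Definition a3 (n : nat) (k : R) : R :=
  - (27 * (peval (Ppol n) k - 1) ^+ 2) / (4 * (peval (Qpol n) k - k - 2) ^+ 2).
Definition b3 (n : nat) (k : R) : R :=
  (27 * (peval (Ppol n) k - 1) ^+ 3) / (4 * (peval (Qpol n) k - k - 2) ^+ 3).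

Definition Uset (n r : nat) (t : R * R * R) : Prop :=
  let: (k, a, b) := t in
  [/\ ~ (inB n k \/ inC n k), k != 0,
      (\rank (Bmat n k a b) <= r)%N,
      4 * a ^+ 3 + 27 * b ^+ 2 = 0
    & ~ (a = 0 /\ b = 0)].

End Sets.

(* Main.v *)
Require Import Defs.
From HB Require Import structures.
From mathcomp Require Import all_boot all_order all_algebra.
From mathcomp Require Import reals.
From mathcomp Require Import ring lra zify.
From Stdlib Require Import Classical.
Import Order.TTheory GRing.Theory Num.Theory.
Local Open Scope ring_scope.
Section Circ.
Variable R : realType.
Variable n : nat.
Hypothesis n2 : (2 <= n)%N.

Lemma ord_predE (j : 'I_n) :
  (ord_pred j : nat) = if (j : nat) == 0%N then n.-1 else (j : nat).-1.
Proof.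
rewrite /ord_pred /=; have := ltn_ord j.
case: eqP => [->|hj] hjn; first by rewrite add0n modn_small //; lia.
have -> : ((j + n).-1 = (j : nat).-1 + n)%N by lia.
by rewrite modnDr modn_small //; lia.
Qed.

Definition ee (i j : 'I_n) : nat := if (i <= j)%N then (j - i)%N else (n + j - i)%N.

Lemma ee_lt i j : (ee i j < n)%N.
Proof. rewrite /ee; have := ltn_ord i; have := ltn_ord j; case: (leqP i j); lia. Qed.

Lemma ee_pred i j : ee i (ord_pred j) = if ee i j == 0%N then n.-1 else (ee i j).-1.
Proof.
rewrite /ee ord_predE; have := ltn_ord i; have := ltn_ord j.
case: (eqVneq (j : nat) 0%N) => [->|hj] hjn hin.
  case: (leqP i 0%N) => hi0; case: (leqP i n.-1) => hi1; case: eqP; lia.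
case: (leqP i j) => hij; case: (leqP i (j : nat).-1) => hi1; case: eqP; lia.
Qed.

Lemma ee_eq0 i j : (ee i j == 0%N) = (i == j).
Proof.
rewrite /ee; have := ltn_ord i; have := ltn_ord j.
case: (eqVneq i j) => [->|hij]; first by rewrite leqnn subnn.
have hij' : (i : nat) != j by [].
case: (leqP i j); lia.
Qed.

Lemma ee_eq1 i j : (ee i j == 1%N) = (i == ord_pred j).
Proof.
rewrite -ee_eq0 ee_pred; have := ee_lt i j; case: (ee i j) => [|[|m]] // _.
by rewrite /=; symmetry; apply/negbTE/eqP; lia.
Qed.

Variables (k : R) (x : nat -> R).
Hypothesis xrec : forall m, x m.+2 = k * x m.+1 + x m.

Definition Cm : 'M[R]_n := \matrix_(i, j) x (ee i j).+1.
Definition Nm : 'M[R]_n := \matrix_(l, j)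
  ((l == j)%:R - k * (l == ord_pred j)%:R - (l == ord_pred (ord_pred j))%:R).
Definition Am := x 1%N - x n.+1.
Definition Dm := x 0%N - x n.
Definition Mm : 'M[R]_n := \matrix_(i, j)
  (Am * (i == j)%:R + Dm * (i == ord_pred j)%:R).

Lemma sum_delta (F : 'I_n -> R) j : \sum_l F l * (l == j)%:R = F j.
Proof.
rewrite (bigD1 j) //= eqxx mulr1 big1 ?addr0 // => l /negbTE ->.
by rewrite mulr0.
Qed.

Lemma sumN (F : 'I_n -> R) j :
  \sum_l F l * Nm l j = F j - k * F (ord_pred j) - F (ord_pred (ord_pred j)).
Proof.
under eq_bigr do rewrite mxE !mulrBr mulrCA.
by rewrite !sumrB -mulr_sumr !sum_delta.
Qed.

Lemma sumM (F : 'I_n -> R) j :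
  \sum_i F i * Mm i j = Am * F j + Dm * F (ord_pred j).
Proof.
under eq_bigr do rewrite mxE mulrDr mulrCA [F _ * (Dm * _)]mulrCA.
by rewrite big_split /= -!mulr_sumr !sum_delta.
Qed.


Lemma CN : Cm *m Nm = Mm.
Proof.
apply/matrixP => i j; rewrite !mxE.
under eq_bigr do rewrite [Cm i _]mxE.
rewrite (sumN (fun l => x (ee i l).+1)).
rewrite -(ee_eq0 i j) -(ee_eq1 i j) !ee_pred.
have e1 : (n.-1).+2 = n.+1 by lia.
have e2 : (n.-1).+1 = n by lia.
have e3 : ((n.-1).-1).+1 = n.-1 by lia.
have := ee_lt i j; case: (ee i j) => [|[|m]] hm.
- have h1 : (n.-1 == 0)%N = false by apply/negbTE/eqP; lia.
  rewrite eqxx h1 (_ : (0 == 1)%N = false) //.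
  rewrite mulr1 mulr0 addr0 /Am e2 e3.
  have -> : x n.+1 = k * x n + x n.-1 by have := xrec n.-1; rewrite e1 e2.
  by rewrite opprD addrA.
- rewrite eqxx (_ : (1 == 0)%N = false) // (_ : 1.-1 = 0)%N // eqxx.
  rewrite mulr0 mulr1 add0r /Dm e2.
  by rewrite xrec; ring.
- rewrite (_ : (m.+2 == 0)%N = false) // (_ : (m.+2 == 1)%N = false) //.
  rewrite (_ : (m.+2.-1 == 0)%N = false) //.
  rewrite !mulr0 addr0 (_ : (m.+2.-1.-1.+1 = m.+1)%N) // (_ : (m.+2.-1.+1 = m.+2)%N) //.
  by rewrite xrec; ring.
Qed.

Lemma Nfree : k != 0 -> row_free Nm.
Proof.
move=> k0; apply: inj_row_free => u hu.
set v := fun j => u 0 j.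
have hj : forall j, v j - k * v (ord_pred j) - v (ord_pred (ord_pred j)) = 0.
  move=> j; move/matrixP: hu => /(_ 0 j); rewrite !mxE => <-.
  by rewrite -sumN.
have h0 : \sum_j v (ord_pred j) * (v j - k * v (ord_pred j) - v (ord_pred (ord_pred j))) = 0.
  by rewrite big1 // => j _; rewrite hj mulr0.
have e1 : \sum_j v j * v (ord_pred j) = \sum_j v (ord_pred j) * v (ord_pred (ord_pred j)).
  exact: (reindex_inj (@ord_pred_inj n)).
have e2 : \sum_j v j ^+ 2 = \sum_j v (ord_pred j) ^+ 2.
  exact: (reindex_inj (@ord_pred_inj n)).
have hs : \sum_j v j ^+ 2 = 0.
  move: h0; under eq_bigr do rewrite !mulrBr.
  rewrite !sumrB -e1.
  under [X in _ - X - _]eq_bigr do rewrite mulrCA -expr2.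
  rewrite -mulr_sumr -e2.
  under [X in X - _ - _ = _]eq_bigr do rewrite mulrC.
  by move=> /eqP; rewrite addrAC subrr sub0r oppr_eq0 mulf_eq0 (negbTE k0) /= => /eqP.
apply/rowP => j; rewrite mxE; apply/eqP; rewrite -sqrf_eq0; apply/eqP.
have := psumr_eq0P (P := predT) (F := fun j => v j ^+ 2) _ hs.
by apply => // i _; rewrite sqr_ge0.
Qed.


Lemma Mker {u : 'rV[R]_n} : u *m Mm = 0 -> forall j, Am * u 0 j + Dm * u 0 (ord_pred j) = 0.
Proof.
move=> hu j; move/matrixP: hu => /(_ 0 j); rewrite !mxE => <-.
by rewrite -sumM.
Qed.

Lemma sumsq0 (v : 'I_n -> R) : \sum_j v j ^+ 2 = 0 -> forall j, v j = 0.
Proof.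
move=> hs j; apply/eqP; rewrite -sqrf_eq0; apply/eqP.
have := psumr_eq0P (P := predT) (F := fun j => v j ^+ 2) _ hs.
by apply => // i _; rewrite sqr_ge0.
Qed.

Lemma Mfree : Am ^+ 2 != Dm ^+ 2 -> row_free Mm.
Proof.
move=> hAD; apply: inj_row_free => u hu.
have hj := Mker hu; set v := fun j => u 0 j.
have hsq : forall j, Am ^+ 2 * v j ^+ 2 = Dm ^+ 2 * v (ord_pred j) ^+ 2.
  move=> j; have := hj j; rewrite -/(v j) -/(v (ord_pred j)) => h.
  have h' : Am * v j = - (Dm * v (ord_pred j)) by apply/eqP; rewrite -addr_eq0 h.
  by rewrite -!exprMn h' sqrrN.
have e2 : \sum_j v j ^+ 2 = \sum_j v (ord_pred j) ^+ 2.
  exact: (reindex_inj (@ord_pred_inj n)).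
have hs : (Am ^+ 2 - Dm ^+ 2) * \sum_j v j ^+ 2 = 0.
  rewrite mulrBl {2}e2 !mulr_sumr.
  by under eq_bigr do rewrite hsq; rewrite subrr.
have hs' : \sum_j v j ^+ 2 = 0.
  by move/eqP: hs; rewrite mulf_eq0 subr_eq0 (negbTE hAD) /= => /eqP.
apply/rowP => j; rewrite !mxE.
have := @sumsq0 (fun j => u 0 j) hs' j; done.
Qed.

Lemma n_gt0 : (0 < n)%N. Proof. lia. Qed.

Lemma Mrank1 : (Am != 0) || (Dm != 0) -> (n.-1 <= \rank Mm)%N.
Proof.
case: (eqVneq Am 0) => [A0|A0] /= D0.
  have : row_free Mm by apply: Mfree; rewrite A0 expr0n /= eq_sym sqrf_eq0.
  by rewrite /row_free => /eqP ->; lia.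
pose i0 := Ordinal n_gt0.
pose w : 'rV[R]_n := \row_(j < n) (- Dm / Am) ^+ j.
have sub : (kermx Mm <= w)%MS.
  apply/row_subP => i.
  have hv : row i (kermx Mm) *m Mm = 0 by rewrite -row_mul mulmx_ker row0.
  move: (row i (kermx Mm)) hv => v hv.
  have hj := Mker hv.
  apply/sub_rVP; exists (v 0 i0); apply/rowP => j.
  rewrite !mxE; case: j => m hm.
  elim: m hm => [|m IH] hm.
    by rewrite expr0 mulr1; congr (v 0 _); apply: val_inj.
  have := hj (Ordinal hm).
  have -> : ord_pred (Ordinal hm) = Ordinal (ltnW hm).
    by apply: ord_inj; rewrite ord_predE.
  rewrite IH => h.
  have hx : Am * v 0 (Ordinal hm) = - (Dm * (v 0 i0 * (- Dm / Am) ^+ m)).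
    by apply/eqP; rewrite -addr_eq0 h.
  by apply: (mulfI A0); rewrite hx exprS; field.
have := mxrankS sub; rewrite mxrank_ker => h.
have := rank_leq_row w; lia.
Qed.

Lemma Mrank_le : ~~ odd n -> Am = Dm \/ Am = - Dm -> (\rank Mm <= n.-1)%N.
Proof.
move=> nev hAD.
pose i0 := Ordinal n_gt0.
suff [w w0 hw] : exists2 w : 'rV[R]_n, w != 0 & w *m Mm = 0.
  have : (w <= kermx Mm)%MS by apply/sub_kermxP.
  move/mxrankS; rewrite mxrank_ker rank_rV w0 => h.
  have := rank_leq_row Mm; lia.
case: hAD => hAD.
  exists (\row_(j < n) (-1) ^+ j).
    apply/eqP => /rowP /(_ i0); rewrite !mxE expr0 => /eqP; rewrite oner_eq0 //.
  apply/rowP => j; rewrite !mxE sumM !mxE hAD -mulrDr ord_predE.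
  case: eqP => [->|hj].
    rewrite expr0 -signr_odd (_ : odd n.-1 = true); first by rewrite expr1 subrr mulr0.
    by move: nev; case: (n) n2 => [|n'] //= _; rewrite negbK.
  rewrite -[in (-1) ^+ j](prednK (n := j)); last by lia.
  by rewrite exprS mulN1r addNr mulr0.
exists (\row_(j < n) 1).
  apply/eqP => /rowP /(_ i0); rewrite !mxE => /eqP; rewrite oner_eq0 //.
apply/rowP => j; rewrite !mxE sumM !mxE hAD.
by rewrite !mulr1 addNr.
Qed.

End Circ.
Lemma recpairS p0 p1 m : recpair p0 p1 m.+1 = ((recpair p0 p1 m).2, 'X * (recpair p0 p1 m).2 + (recpair p0 p1 m).1).
Proof. by rewrite /=; case: (recpair p0 p1 m). Qed.

Lemma fpolSS m : fpol m.+2 = 'X * fpol m.+1 + fpol m.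
Proof. by rewrite /fpol !recpairS. Qed.
Lemma gpolSS m : gpol m.+2 = 'X * gpol m.+1 + gpol m.
Proof. by rewrite /gpol !recpairS. Qed.

Section PE.
Variable R : realType.
Variable k : R.

Lemma pevalD p q : peval (p + q) k = peval p k + peval q k.
Proof. by rewrite /peval rmorphD hornerD. Qed.
Lemma pevalB p q : peval (p - q) k = peval p k - peval q k.
Proof. by rewrite /peval rmorphB hornerD hornerN. Qed.
Lemma pevalXM p : peval ('X * p) k = k * peval p k.
Proof. by rewrite /peval rmorphM hornerM /= map_polyX hornerX. Qed.
Lemma pevalC c : peval c%:P k = c%:~R.
Proof. by rewrite /peval map_polyC hornerC. Qed.
Lemma pevalX : peval 'X k = k.
Proof. by rewrite /peval map_polyX hornerX. Qed.
Lemma peval1 : peval 1 k = 1.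
Proof. by rewrite /peval rmorph1 hornerC. Qed.

Definition fr m := peval (fpol m) k.
Definition gr m := peval (gpol m) k.

Lemma frSS m : fr m.+2 = k * fr m.+1 + fr m.
Proof. by rewrite /fr fpolSS pevalD pevalXM. Qed.
Lemma grSS m : gr m.+2 = k * gr m.+1 + gr m.
Proof. by rewrite /gr gpolSS pevalD pevalXM. Qed.
Lemma fr0 : fr 0 = 0. Proof. by rewrite /fr /fpol /= /peval rmorph0 horner0. Qed.
Lemma fr1 : fr 1 = 1. Proof. by rewrite /fr /fpol /= peval1. Qed.
Lemma gr0 : gr 0 = 2. Proof. by rewrite /gr /gpol /= pevalC. Qed.
Lemma gr1 : gr 1 = k. Proof. by rewrite /gr /gpol /= pevalX. Qed.

Lemma gr_fr m : gr m = 2 * fr m.+1 - k * fr m.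
Proof.
suff : gr m = 2 * fr m.+1 - k * fr m /\ gr m.+1 = 2 * fr m.+2 - k * fr m.+1 by case.
elim: m => [|m [IH1 IH2]].
  by rewrite gr0 gr1 frSS fr1 fr0; split; ring.
split => //; rewrite grSS IH1 IH2 !frSS; ring.
Qed.

Lemma cassini m : fr m.+1 ^+ 2 - k * fr m.+1 * fr m - fr m ^+ 2 = (-1) ^+ m.
Proof.
elim: m => [|m IH]; first by rewrite fr1 fr0; ring.
by rewrite [(-1) ^+ _]exprS -IH frSS; ring.
Qed.

Lemma FLseqE a b m : FLseq k a b m = a * fr m + b * gr m.
Proof.
suff : FLseq k a b m = a * fr m + b * gr m /\ FLseq k a b m.+1 = a * fr m.+1 + b * gr m.+1 by case.
have FS : forall m, FLseq k a b m.+2 = k * FLseq k a b m.+1 + FLseq k a b m.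
  by move=> j; rewrite /FLseq /=; case: (FLpair k a b j).
elim: m => [|m [IH1 IH2]].
  by rewrite /FLseq /= fr0 fr1 gr0 gr1; split; ring.
by split => //; rewrite FS IH1 IH2 frSS grSS; ring.
Qed.

Lemma FLseq_rec a b m : FLseq k a b m.+2 = k * FLseq k a b m.+1 + FLseq k a b m.
Proof. by rewrite /FLseq /=; case: (FLpair k a b m). Qed.

End PE.
Arguments fr {R} k m. Arguments gr {R} k m.
Arguments frSS {R} k m. Arguments grSS {R} k m.
Arguments fr0 {R} k. Arguments fr1 {R} k. Arguments gr0 {R} k. Arguments gr1 {R} k.
Arguments gr_fr {R} k m. Arguments cassini {R} k m.
Arguments FLseqE {R} k a b m. Arguments FLseq_rec {R} k a b m.
Lemma roots_fin (R : realType) (p : {poly R}) :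
  p != 0 -> exists s : seq R, forall x, root p x -> x \in s.
Proof.
suff H : forall m (p : {poly R}), (size p <= m)%N -> p != 0 ->
    exists s : seq R, forall x, root p x -> x \in s.
  by apply: (H (size p)).
elim=> [|m IH] {}p hs p0.
  by move: hs; rewrite leqn0 size_poly_eq0 (negbTE p0).
case: (classic (exists x, root p x)) => [[x0 hx0]|hno]; last first.
  by exists [::] => x hx; exfalso; apply: hno; exists x.
case/factor_theorem: hx0 => q hq.
have q0 : q != 0 by apply: contraNneq p0 => q0; rewrite hq q0 mul0r.
have hsq : (size q <= m)%N.
  move: hs; rewrite hq size_Mmonic ?monicXsubC // size_XsubC addn2 /=.
  by [].
have [s hs'] := IH q hsq q0.
exists (x0 :: s) => x; rewrite hq rootM root_XsubC in_cons => /orP [h|h].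
  by rewrite hs' ?orbT.
by rewrite h.
Qed.

Lemma solve (R : realType) (al be a b : R) : al != 0 -> be != 0 ->
  a * al + b * be = 0 -> 4 * a ^+ 3 + 27 * b ^+ 2 = 0 -> ~ (a = 0 /\ b = 0) ->
  a = - (27 * al ^+ 2) / (4 * be ^+ 2) /\ b = (27 * al ^+ 3) / (4 * be ^+ 3).
Proof.
move=> al0 be0 h hc hab.
have hbb : b * be = - (a * al) by apply/eqP; rewrite -addr_eq0 addrC h.
have hb : b = - (a * al) / be by rewrite -hbb mulfK.
have a0 : a != 0.
  apply/eqP => a0; apply: hab; split => //.
  by move: hb; rewrite a0 mul0r oppr0 mul0r.
have e : 4 * a + 27 * al ^+ 2 / be ^+ 2 = 0.
  have : a ^+ 2 * (4 * a + 27 * al ^+ 2 / be ^+ 2) = 0.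
    transitivity (4 * a ^+ 3 + 27 * b ^+ 2); last exact: hc.
    by rewrite hb; field.
  by move/eqP; rewrite mulf_eq0 sqrf_eq0 (negbTE a0) /= => /eqP.
have ea : a = - (27 * al ^+ 2) / (4 * be ^+ 2).
  have ea : a = (4 * a + 27 * al ^+ 2 / be ^+ 2 - 27 * al ^+ 2 / be ^+ 2) / 4 by field.
  by rewrite {1}ea e; field.
split => //.
by rewrite hb ea; field.
Qed.
Section Main.
Variable R : realType.
Variable n : nat.
Hypothesis hn4 : (4 <= n)%N.
Hypothesis hev : ~~ odd n.

Let n2 : (1 < n)%N. Proof. lia. Qed.

Lemma rkB (k a b : R) : k != 0 -> \rank (Bmat n k a b) = \rank (Mm R n (FLseq k a b)).
Proof.
move=> k0.
have -> : Bmat n k a b = Cm R n (FLseq k a b).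
  by apply/matrixP => i j; rewrite !mxE /ee; case: ifP => _; rewrite addn1.
by rewrite -(mxrankMfree _ (@Nfree R n k k0)) (@CN R n n2 k _ (FLseq_rec k a b)).
Qed.

Lemma L1 (k a b : R) : a * (peval (Fpol n) k - 1) + b * (peval (Gpol n) k - k + 2)
  = Dm R n (FLseq k a b) - Am R n (FLseq k a b).
Proof.
have f0 : peval (fpol 0) k = 0 := fr0 k.
have f1 : peval (fpol 1) k = 1 := fr1 k.
have g0 : peval (gpol 0) k = 2 := gr0 k.
have g1 : peval (gpol 1) k = k := gr1 k.
rewrite /Dm /Am /Fpol /Gpol !pevalB !FLseqE /fr /gr f0 f1 g0 g1; ring.
Qed.

Lemma L3 (k a b : R) : a * (peval (Ppol n) k - 1) + b * (peval (Qpol n) k - k - 2)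
  = - (Am R n (FLseq k a b) + Dm R n (FLseq k a b)).
Proof.
have f0 : peval (fpol 0) k = 0 := fr0 k.
have f1 : peval (fpol 1) k = 1 := fr1 k.
have g0 : peval (gpol 0) k = 2 := gr0 k.
have g1 : peval (gpol 1) k = k := gr1 k.
rewrite /Dm /Am /Ppol /Qpol !pevalD !FLseqE /fr /gr f0 f1 g0 g1; ring.
Qed.

Lemma fr_at0 m : fr (0 : R) m = (odd m)%:R.
Proof.
suff : fr (0 : R) m = (odd m)%:R /\ fr (0 : R) m.+1 = (odd m.+1)%:R by case.
elim: m => [|m [IH1 IH2]]; first by rewrite fr0 fr1.
by split => //; rewrite frSS mul0r add0r IH1 /=; case: (odd m).
Qed.

Lemma inB0 : inB n (0 : R).
Proof.
left; rewrite /Fpol pevalB -/(fr _ _) -/(fr _ _) !fr_at0 /= (negbTE hev) /=.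
by rewrite subr0 subrr.
Qed.

Lemma key (k : R) :
  (peval (Fpol n) k - 1) * (peval (Qpol n) k - k - 2)
  - (peval (Gpol n) k - k + 2) * (peval (Ppol n) k - 1) = -4 * (peval (gpol n) k - 2).
Proof.
have cas := cassini k n.
rewrite -signr_odd (negbTE hev) expr0 in cas.
rewrite /Fpol /Gpol /Ppol /Qpol !pevalB !pevalD -!/(fr _ _) -!/(gr _ _).
rewrite !gr_fr !frSS.
apply/eqP; rewrite -subr_eq0; apply/eqP.
transitivity (4 * (fr k n.+1 ^+ 2 - k * fr k n.+1 * fr k n - fr k n ^+ 2 - 1)).
  ring.
by rewrite cas subrr mulr0.
Qed.

Lemma gr1_ge m : 1 <= gr (1 : R) m.+1 /\ gr (1 : R) m.+1 <= gr (1 : R) m.+2 /\ 3 <= gr (1 : R) m.+2.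
Proof.
elim: m => [|m [h1 [h2 h3]]].
  rewrite grSS gr1 gr0 mul1r; split; first by rewrite lexx.
  by split; lra.
rewrite [gr 1 m.+3]grSS mul1r; split; [lra | split; lra].
Qed.

End Main.
Theorem theorem4p14 (R : realType) (n : nat) (hn4 : (4 <= n)%N) (hev : ~~ odd n) :
  [/\ (forall t : R * R * R,
         Uset n n.-1 t <->
         exists k : R, ~ (inB n k \/ inC n k) /\
           (t = (k, a2 n k, b2 n k) \/ t = (k, a3 n k, b3 n k))),
      (exists s : seq (R * R * R), forall t : R * R * R,
         Uset n n.-1 t -> \rank (Bmat n t.1.1 t.1.2 t.2) != n.-1 -> t \in s)
    & (forall r : nat, (1 <= r)%N -> (r <= n - 2)%N ->
         exists s : seq (R * R * R), forall t : R * R * R,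
           Uset n n.-1 t -> \rank (Bmat n t.1.1 t.1.2 t.2) = r -> t \in s)].
Proof.
have n2 : (1 < n)%N by lia.
have sol2 : forall k a b : R, ~ (inB n k \/ inC n k) -> 4 * a ^+ 3 + 27 * b ^+ 2 = 0 ->
    ~ (a = 0 /\ b = 0) -> Am R n (FLseq k a b) = Dm R n (FLseq k a b) ->
    a = a2 n k /\ b = b2 n k.
  move=> k a b hBC hc hab hAD.
  apply: (@solve R) => //.
  - by apply/eqP => h; apply: hBC; left; left.
  - by apply/eqP => h; apply: hBC; left; right.
  - by rewrite (@L1 R n) hAD subrr.
have sol3 : forall k a b : R, ~ (inB n k \/ inC n k) -> 4 * a ^+ 3 + 27 * b ^+ 2 = 0 ->
    ~ (a = 0 /\ b = 0) -> Am R n (FLseq k a b) = - Dm R n (FLseq k a b) ->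
    a = a3 n k /\ b = b3 n k.
  move=> k a b hBC hc hab hAD.
  apply: (@solve R) => //.
  - by apply/eqP => h; apply: hBC; right; left.
  - by apply/eqP => h; apply: hBC; right; right.
  - by rewrite (@L3 R n) hAD addNr oppr0.
have claim : exists s : seq (R * R * R), forall t : R * R * R, Uset n n.-1 t ->
    (\rank (Bmat n t.1.1 t.1.2 t.2) < n.-1)%N -> t \in s.
  pose p : {poly R} := map_poly (fun z : int => z%:~R) (gpol n) - 2%:P.
  have p0 : p != 0.
    apply/eqP => hp; have := congr1 (fun q => q.[1]) hp.
    rewrite /p hornerD hornerN hornerC horner0.
    have e : (map_poly (fun z : int => z%:~R) (gpol n)).[1] = gr (1 : R) n by [].
    rewrite e; have [_ [_ h3]] := @gr1_ge R n.-2.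
    rewrite (_ : n.-2.+2 = n) in h3; last by lia.
    move=> h; clear hp e; lra.
  have [rs hrs] := @roots_fin R p p0.
  exists [seq (k, a2 n k, b2 n k) | k <- rs].
  move=> [[k a] b] hU; have [hBC k0 hr hc hab] := hU; rewrite /= => hlt.
  rewrite (@rkB R n hn4) // in hlt.
  have [A0 D0] : Am R n (FLseq k a b) = 0 /\ Dm R n (FLseq k a b) = 0.
    case E : ((Am R n (FLseq k a b) != 0) || (Dm R n (FLseq k a b) != 0)).
      by have := @Mrank1 R n n2 _ E; lia.
    by move/norP: E => [/negPn/eqP -> /negPn/eqP ->].
  have [ea eb] := sol2 k a b hBC hc hab (etrans A0 (esym D0)).
  have hl1 := @L1 R n k a b; rewrite A0 D0 subrr in hl1.
  have hl3 := @L3 R n k a b; rewrite A0 D0 addr0 oppr0 in hl3.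
  set al := peval (Fpol n) k - 1 in hl1.
  set be := peval (Gpol n) k - k + 2 in hl1.
  set ga := peval (Ppol n) k - 1 in hl3.
  set de := peval (Qpol n) k - k - 2 in hl3.
  have hdet : al * de - be * ga = 0.
    case: (eqVneq a 0) => [a0|a0].
      have b0 : b != 0 by apply/eqP => b0; apply: hab.
      apply: (mulfI b0); rewrite mulr0.
      transitivity (al * (a * ga + b * de) - ga * (a * al + b * be)); first ring.
      by rewrite hl1 hl3 !mulr0 subrr.
    apply: (mulfI a0); rewrite mulr0.
    transitivity (de * (a * al + b * be) - be * (a * ga + b * de)); first ring.
    by rewrite hl1 hl3 !mulr0 subrr.
  have hg : peval (gpol n) k - 2 = 0.
    have := @key R n hev k; rewrite -/al -/be -/ga -/de hdet => /esym/eqP.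
    by rewrite mulf_eq0 oppr_eq0 pnatr_eq0 /= => /eqP.
  have : k \in rs.
    apply: hrs; rewrite /root /p hornerD hornerN hornerC.
    by rewrite -/(peval (gpol n) k) hg.
  by rewrite ea eb => hk; apply: (map_f (fun k => (k, a2 n k, b2 n k)) hk).
split.
- move=> [[k a] b]; split.
  + case=> hBC k0 hr hc hab.
    have hr' : (\rank (Mm R n (FLseq k a b)) <= n.-1)%N by rewrite -(@rkB R n hn4).
    have hsq : Am R n (FLseq k a b) ^+ 2 == Dm R n (FLseq k a b) ^+ 2.
      apply/negPn/negP => hne; have := @Mfree R n _ hne.
      by rewrite /row_free => /eqP h; lia.
    move: hsq; rewrite eqf_sqr => /orP [/eqP h|/eqP h].
      exists k; split => //; left.
      by have [-> ->] := sol2 k a b hBC hc hab h.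
    exists k; split => //; right.
    by have [-> ->] := sol3 k a b hBC hc hab h.
  + case=> k' [hBC [e|e]]; case: e => -> -> ->.
    * have al0 : peval (Fpol n) k' - 1 != 0.
        by apply/eqP => h; apply: hBC; left; left.
      have be0 : peval (Gpol n) k' - k' + 2 != 0.
        by apply/eqP => h; apply: hBC; left; right.
      split => //.
      -- by apply/eqP => k0; apply: hBC; left; rewrite k0; apply: inB0.
      -- have k0 : k' != 0.
           by apply/eqP => k0; apply: hBC; left; rewrite k0; apply: inB0.
         rewrite (@rkB R n hn4) //; apply: (@Mrank_le R n n2) => //; left.
         have := @L1 R n k' (a2 n k') (b2 n k').
         rewrite (_ : a2 n k' * _ + b2 n k' * _ = 0); last by rewrite /a2 /b2; field.
         by move/esym/eqP; rewrite subr_eq0 => /eqP.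
      -- by rewrite /a2 /b2; field.
      -- case=> ha _; move/eqP: al0; apply.
         have : (peval (Fpol n) k' - 1) ^+ 2 = - (4 * (peval (Gpol n) k' - k' + 2) ^+ 2 / 27) * a2 n k'.
           by rewrite /a2; field.
         by rewrite ha mulr0 => /eqP; rewrite sqrf_eq0 => /eqP.
    * have al0 : peval (Ppol n) k' - 1 != 0.
        by apply/eqP => h; apply: hBC; right; left.
      have be0 : peval (Qpol n) k' - k' - 2 != 0.
        by apply/eqP => h; apply: hBC; right; right.
      split => //.
      -- by apply/eqP => k0; apply: hBC; left; rewrite k0; apply: inB0.
      -- have k0 : k' != 0.
           by apply/eqP => k0; apply: hBC; left; rewrite k0; apply: inB0.
         rewrite (@rkB R n hn4) //; apply: (@Mrank_le R n n2) => //; right.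
         have := @L3 R n k' (a3 n k') (b3 n k').
         rewrite (_ : a3 n k' * _ + b3 n k' * _ = 0); last by rewrite /a3 /b3; field.
         by move/esym/eqP; rewrite oppr_eq0 addr_eq0 => /eqP.
      -- by rewrite /a3 /b3; field.
      -- case=> ha _; move/eqP: al0; apply.
         have : (peval (Ppol n) k' - 1) ^+ 2 = - (4 * (peval (Qpol n) k' - k' - 2) ^+ 2 / 27) * a3 n k'.
           by rewrite /a3; field.
         by rewrite ha mulr0 => /eqP; rewrite sqrf_eq0 => /eqP.
- have [s hs] := claim; exists s => t hU hne; apply: (hs _ hU).
  move: hU hne; case: t => [[k a] b] [_ _ hr _ _] /= hne.
  by rewrite ltn_neqAle hne hr.
- move=> r r1 r2; have [s hs] := claim; exists s => t hU hr; apply: (hs _ hU).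
  by rewrite hr; lia.
Qed.
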